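(* Let $\mathcal G$ be a melonic 1PI Feynman graph with $2N$ external edges and more than one vertex in the quartic melonic $U(1)^6$ model with closure constraint. Then its external black and white nodes can be grouped into $N$ $(d-1)$-dipoles ($d=6$), and $\mathcal G$ has $N$ external (open) faces all of the same color, whose boundaries connect pairwise external nodes belonging to different external $(d-1)$-dipoles.
   Context: Feynman graphs are built from quartic melonic vertices (bipartite 6-colored bubbles $b_2^{(i)}$ with two black and two white nodes) joined by dotted propagator edges of color $0$; external edges are dotted half-edges hooked to external nodes. A face is a maximal bicolored path or cycle of edges of colors $\{0,j\}$; it is external (open) if it is an open path. A $k$-dipole is a pair of a black and a white node joined by $k$ colored edges (for a $(d-1)$-dipole: all colors but one). A graph is melonic if it is a leading order graph, i.e. obtained from a vacuum graph whose intermediate field ($\Theta$-) representation is a tree (loop vertices = cycles of dotted edges, colored edges = original vertices) by optimally deleting tadpole dotted edges along boundaries of open faces; 1PI means one-particle irreducible (connected after cutting any single dotted edge). *)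

(* Defs.v *)
(* Combinatorial encoding of Feynman graphs of the quartic
   melonic U(1)^6 model (d = 6).  Colours 1..6 are encoded as 'I_6. *)
From mathcomp Require Import all_boot.
Set Implicit Arguments. Unset Strict Implicit. Unset Printing Implicit Defensive.

(* A node is (vertex, position); positions 0,2 are black, 1,3 are white.
   In a vertex b_2^(i) (i = vcol v): nodes 0-1 and 2-3 are joined by all
   colours but i; the colour-i edges join 0-3 and 1-2. *)
Definition node (V : nat) := ('I_V * 'I_4)%type.

Record feyngraph (V : nat) := FGraph {
  vcol : 'I_V -> 'I_6;
  prop : node V -> option (node V)         (* dotted (colour 0) edges; None = external half-edge *)
}.

Definition black V (x : node V) : bool := ~~ odd x.2.

Definition wf_graph V (G : feyngraph V) : Prop :=
  forall x y, prop G x = Some y -> prop G y = Some x /\ black x != black y.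

Definition external V (G : feyngraph V) (x : node V) : bool := prop G x == None.
Definition ext_nodes V (G : feyngraph V) : {set node V} := [set x | external G x].

Definition cpart V (G : feyngraph V) (j : 'I_6) (x : node V) : node V :=
  (x.1, if j == vcol G x.1 then rev_ord x.2
        else inord (if odd x.2 then (x.2 : nat).-1 else (x.2 : nat).+1)).

(* bicoloured {0,j} adjacency *)
Definition facerel V (G : feyngraph V) (j : 'I_6) : rel (node V) :=
  fun x y => (y == cpart G j x) || (prop G x == Some y).

Definition face_of V (G : feyngraph V) (j : 'I_6) (x : node V) : {set node V} :=
  [set y | connect (facerel G j) x y].

Definition closed_faces_j V (G : feyngraph V) (j : 'I_6) : {set {set node V}} :=
  [set C | [exists x, (C == face_of G j x) && [forall y in C, ~~ external G y]]].
Definition open_faces_j V (G : feyngraph V) (j : 'I_6) : {set {set node V}} :=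
  [set C | [exists x, (C == face_of G j x) && [exists y in C, external G y]]].

Definition n_closed_faces V (G : feyngraph V) : nat :=
  \sum_(j : 'I_6) #|closed_faces_j G j|.

(* the open face of colour j starting at the external node x ends at the
   external node y *)
Definition face_step V (G : feyngraph V) (j : 'I_6) (o : option (node V)) :=
  obind (fun z => prop G (cpart G j z)) o.
Definition face_connects V (G : feyngraph V) (j : 'I_6) (x y : node V) : Prop :=
  external G x /\
  exists n z, iter n (face_step G j) (Some x) = Some z /\
              cpart G j z = y /\ external G y.

Definition dipole V (G : feyngraph V) (j : 'I_6) (b w : node V) : Prop :=
  black b /\ ~~ black w /\ forall k : 'I_6, k != j -> cpart G k b = w.

Definition grel V (G : feyngraph V) : rel (node V) :=
  fun x y => (x.1 == y.1) || (prop G x == Some y).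
Definition connected V (G : feyngraph V) : Prop :=
  forall x y, connect (grel G) x y.
Definition grel_cut V (G : feyngraph V) (a b : node V) : rel (node V) :=
  fun x y => (x.1 == y.1) ||
             ((prop G x == Some y) && ~~ (((x == a) && (y == b)) || ((x == b) && (y == a)))).
Definition onePI V (G : feyngraph V) : Prop :=
  connected G /\
  forall a b, prop G a = Some b -> forall x y, connect (grel_cut G a b) x y.

(* intermediate field (Theta) representation of a vacuum graph:
   dipoles (v,h) = nodes (v,2h) black, (v,2h+1) white;
   loop vertices = cycles dipole -> dotted edge -> next dipole;
   Theta edges = original vertices joining their two dipoles. *)
Definition dip (V : nat) := ('I_V * bool)%type.
Definition dblack V (D : dip V) : node V := (D.1, inord (2 * D.2)).
Definition dwhite V (D : dip V) : node V := (D.1, inord (2 * D.2).+1).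
Definition looprel V (G : feyngraph V) : rel (dip V) :=
  fun D E => (prop G (dwhite D) == Some (dblack E)) || (prop G (dwhite E) == Some (dblack D)).
Definition loop_vertices V (G : feyngraph V) : {set {set dip V}} :=
  [set C | [exists D, C == [set E | connect (looprel G) D E]]].
Definition thetarel V (G : feyngraph V) : rel (dip V) :=
  fun D E => looprel G D E || (D.1 == E.1).
Definition theta_tree V (G : feyngraph V) : Prop :=
  (forall D E, connect (thetarel G) D E) /\ #|loop_vertices G| = V.+1.

Definition vacuum V (G : feyngraph V) : Prop := forall x, prop G x <> None.

Definition deletes_from V (G0 G : feyngraph V) : Prop :=
  vcol G =1 vcol G0 /\ forall x y, prop G x = Some y -> prop G0 x = Some y.

Definition from_tree V (G : feyngraph V) : Prop :=
  exists G0, wf_graph G0 /\ vacuum G0 /\ theta_tree G0 /\ deletes_from G0 G.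

(* melonic = leading order: obtained from a tree vacuum graph by deleting
   dotted edges, optimally, i.e. with the maximal number of closed faces
   among all connected graphs so obtained with the same number of vertices
   and external edges. *)
Definition melonic V (G : feyngraph V) : Prop :=
  wf_graph G /\ from_tree G /\
  forall G' : feyngraph V, wf_graph G' -> from_tree G' -> connected G' ->
    #|ext_nodes G'| = #|ext_nodes G| -> n_closed_faces G' <= n_closed_faces G.

(* Main.v *)
Require Import Defs.
From mathcomp Require Import all_boot all_fingroup zify.
Set Implicit Arguments. Unset Strict Implicit. Unset Printing Implicit Defensive.


Lemma conn_ind (T : finType) (e : rel T) (P : T -> Prop) :
  (forall u w, P u -> e u w -> P w) -> forall x y, P x -> connect e x y -> P y.
Proof.
move=> cl x y Px /connectP[p ep ->]; elim: p x Px ep => //= z p IH x Px /andP[exz ep].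
exact: IH (cl _ _ Px exz) ep.
Qed.

Lemma conn_map (T U : finType) (e : rel T) (e' : rel U) (f : T -> U) :
  (forall x y, e x y -> connect e' (f x) (f y)) ->
  forall x y, connect e x y -> connect e' (f x) (f y).
Proof.
move=> H x y; apply: (conn_ind (P := fun z => connect e' (f x) (f z))) => //.
by move=> u w cu euw; apply: connect_trans cu (H _ _ euw).
Qed.

Section Basic.
Variable V : nat.
Implicit Types (x y : node V) (D E : dip V).

Definition dipof x : dip V := (x.1, 1 < x.2).
Definition flipd D : dip V := (D.1, ~~ D.2).

Lemma flipdK : involutive flipd.
Proof. by case=> v b; rewrite /flipd /= negbK. Qed.

Lemma flipd_neq D : flipd D != D.
Proof. by case: D => v [] ; rewrite /flipd /= xpair_eqE eqxx. Qed.

Lemma dipof_dblack D : dipof (dblack D) = D.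
Proof. by case: D => v []; rewrite /dipof /dblack /= inordK. Qed.

Lemma dipof_dwhite D : dipof (dwhite D) = D.
Proof. by case: D => v []; rewrite /dipof /dwhite /= inordK. Qed.

Lemma black_dblack D : black (dblack D).
Proof. by case: D => v []; rewrite /black /dblack /= inordK. Qed.

Lemma black_dwhite D : black (dwhite D) = false.
Proof. by case: D => v []; rewrite /black /dwhite /= inordK. Qed.

Lemma dblackE x : black x -> dblack (dipof x) = x.
Proof.
case: x => v [[|[|[|[|i]]]] Hi] //= _; rewrite /dblack /dipof /=; congr pair;
  apply: val_inj; rewrite /= inordK //.
Qed.

Lemma dwhiteE x : ~~ black x -> dwhite (dipof x) = x.
Proof.
case: x => v [[|[|[|[|i]]]] Hi] //= _; rewrite /dwhite /dipof /=; congr pair;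
  apply: val_inj; rewrite /= inordK //.
Qed.

Lemma dblack_inj : injective (@dblack V).
Proof. by move=> D E h; rewrite -(dipof_dblack D) h dipof_dblack. Qed.
Lemma dwhite_inj : injective (@dwhite V).
Proof. by move=> D E h; rewrite -(dipof_dwhite D) h dipof_dwhite. Qed.
Lemma dblack_dwhite D E : dblack D != dwhite E.
Proof.
by apply/eqP=> h; move: (black_dblack D); rewrite h black_dwhite.
Qed.

End Basic.


Section Cp.
Variable V : nat.
Implicit Types (x y : node V) (D E : dip V).

Definition tauS (S : {set 'I_V}) D : dip V := if D.1 \in S then flipd D else D.
Definition colS (H : feyngraph V) (j : 'I_6) : {set 'I_V} := [set v | j == vcol H v].

Lemma tauSK S : involutive (tauS S).
Proof. by case=> v b; rewrite /tauS /flipd /=; case vS: (v \in S); rewrite /= ?vS ?negbK. Qed.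
Lemma tauS_inj S : injective (tauS S).
Proof. exact: inv_inj (@tauSK S). Qed.
Lemma tauS0 D : tauS set0 D = D.
Proof. by rewrite /tauS inE. Qed.

Lemma cpart_dblack H j D : cpart H j (dblack D) = dwhite (tauS (colS H j) D).
Proof.
case: D => v b; rewrite /cpart /tauS /colS inE /= /flipd /=.
by case: (j == vcol H v); case: b; congr pair; apply: val_inj; rewrite /= !inordK.
Qed.

Lemma cpart_dwhite H j D : cpart H j (dwhite D) = dblack (tauS (colS H j) D).
Proof.
case: D => v b; rewrite /cpart /tauS /colS inE /= /flipd /=.
by case: (j == vcol H v); case: b; congr pair; apply: val_inj; rewrite /= !inordK.
Qed.

Lemma cpart_black H j x : black (cpart H j x) = ~~ black x.
Proof.
case bx: (black x).
  by rewrite -(dblackE bx) cpart_dblack black_dwhite.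
by rewrite -(dwhiteE (negbT bx)) cpart_dwhite black_dblack.
Qed.

Lemma cpartK (H : feyngraph V) j : involutive (cpart H j).
Proof.
move=> x; case bx: (black x).
  by rewrite -(dblackE bx) cpart_dblack cpart_dwhite tauSK.
by rewrite -(dwhiteE (negbT bx)) cpart_dwhite cpart_dblack tauSK.
Qed.

End Cp.


Section Comps.
Variable T : finType.
Implicit Types (r : rel T) (x y : T).

Definition cls r x := [set y | connect r x y].
Definition comps r := #|[set cls r x | x in T]|.

Lemma cls_eq r : connect_sym r -> forall x y, (cls r x == cls r y) = connect r x y.
Proof.
move=> sym x y; apply/eqP/idP => [h|cxy].
  have: y \in cls r y by rewrite inE connect0.
  by rewrite -h inE.
apply/setP=> z; rewrite !inE; apply/idP/idP => h.
  by apply: connect_trans h; rewrite sym.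
exact: connect_trans cxy h.
Qed.

Lemma card_le_map (U : finType) (f g : T -> U) (F : {set T}) :
  {in F &, forall x y, g x = g y -> f x = f y} -> #|f @: F| <= #|g @: F|.
Proof.
move=> H; case: (set_0Vmem F) => [->|[x0 x0F]]; first by rewrite !imset0 cards0.
pose h u := if [pick x in F | g x == u] is Some x then f x else f x0.
suff ->: f @: F = h @: (g @: F) by apply: leq_imset_card.
apply/setP=> u; apply/imsetP/imsetP => [[x xF ->]|[w /imsetP[x xF ->] ->]].
  exists (g x); first exact: imset_f.
  rewrite /h; case: pickP => [z /andP[zF /eqP gz]|]; first by rewrite (H _ _ zF xF gz).
  by move/(_ x); rewrite xF eqxx.
exists x => //; rewrite /h; case: pickP => [z /andP[zF /eqP gz]|]; first by rewrite (H _ _ zF xF gz).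
by move/(_ x); rewrite xF eqxx.
Qed.

Lemma comps_edge r r' a b : connect_sym r -> subrel r r' ->
  (forall x y, r' x y -> r x y \/ ((x == a) || (x == b)) /\ ((y == a) || (y == b))) ->
  comps r <= (comps r').+1.
Proof.
move=> sym sub H.
pose F := [set x | ~~ connect r a x].
have S1: [set cls r x | x in T] \subset cls r a |: [set cls r x | x in F].
  apply/subsetP=> C /imsetP[x _ ->]; apply/setU1P.
  case cax: (connect r a x); [left | right].
    by apply/eqP; rewrite cls_eq // sym.
  by apply: imset_f; rewrite inE cax.
have S2: #|[set cls r x | x in F]| <= #|[set cls r' x | x in F]|.
  apply: card_le_map => x y xF yF h.
  have: y \in cls r' x by rewrite h inE connect0.
  rewrite inE => cxy; apply/eqP; rewrite cls_eq //.
  move: xF yF; rewrite !inE => xF yF.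
  pose P u := connect r x u \/ (connect r x b /\ connect r a u).
  have: P y.
    apply: (conn_ind (e := r') (P := P)) cxy; last by left; exact: connect0.
    move=> u w Pu /H [ruw|[hu hw]].
      case: Pu => [h1|[h1 h2]]; first by left; exact: connect_trans h1 (connect1 ruw).
      by right; split => //; exact: connect_trans h2 (connect1 ruw).
    have notxa: ~~ connect r x a by rewrite sym.
    have hb: connect r x b.
      case: Pu => [h1|[h1 h2]] //.
      by case/orP: hu => /eqP hu; subst u => //; rewrite h1 in notxa.
    by case/orP: hw => /eqP ->; [right; split => //; exact: connect0 | left].
  by case=> // -[_ h2]; rewrite h2 in yF.
have S3: #|[set cls r' x | x in F]| <= comps r'.
  by apply: subset_leq_card; apply: imsetS; apply/subsetP.
apply: leq_trans (subset_leq_card S1) _.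
by rewrite cardsU1; case: (_ \notin _) => /=; rewrite ?add0n; [ | apply: leq_trans (leqnSn _)];
  apply: leq_trans S2 _; rewrite ?ltnS.
Qed.

Lemma comps_edge_eq r r' a b : connect_sym r -> subrel r r' ->
  (forall x y, r' x y -> r x y \/ ((x == a) || (x == b)) /\ ((y == a) || (y == b))) ->
  connect r a b -> comps r' = comps r.
Proof.
move=> sym sub H cab.
have E: forall x y, connect r' x y = connect r x y.
  move=> x y; apply/idP/idP; last by apply: connect_sub => u w /sub /connect1.
  apply: connect_sub => u w /H [/connect1 //|[/orP[]/eqP-> /orP[]/eqP->]] //;
    by rewrite ?connect0 // sym.
have Ecl: cls r' =1 cls r by move=> x; apply/setP => y; rewrite !inE E.
by rewrite /comps (eq_imset _ Ecl).
Qed.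

Definition lrel (p : {perm T}) : rel T := fun x y => (p x == y) || (p y == x).

Lemma lrel_sym p : connect_sym (lrel p).
Proof. by apply: sym_connect_sym => x y; rewrite /lrel orbC. Qed.

Lemma connect_lrel p x y : connect (lrel p) x y = (y \in porbit p x).
Proof.
apply/idP/idP.
  apply: (conn_ind (P := fun u => u \in porbit p x)); last exact: porbit_id.
  move=> u w ux /orP[]/eqP h.
    have e1: porbit p (p u) = porbit p u by rewrite -(porbit_perm p 1 u) expg1.
    by rewrite -h -eq_porbit_mem e1 eq_porbit_mem.
  by rewrite -eq_porbit_mem -(porbit_perm p 1 w) expg1 h eq_porbit_mem.
case/porbitP=> i ->; elim: i => [|i IH]; first by rewrite expg0 perm1 connect0.
apply: connect_trans IH _; apply: connect1; by rewrite /lrel expgSr permM eqxx.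
Qed.

Lemma comps_lrel p : comps (lrel p) = #|porbits p|.
Proof.
have Ecl: cls (lrel p) =1 porbit p by move=> x; apply/setP => y; rewrite inE connect_lrel.
by rewrite /comps (eq_imset _ Ecl).
Qed.

End Comps.


Lemma comps_eq2 (T : finType) (r r' : rel T) : connect r =2 connect r' -> comps r = comps r'.
Proof.
move=> E; have Ecl: cls r =1 cls r' by move=> x; apply/setP => y; rewrite !inE E.
by rewrite /comps (eq_imset _ Ecl).
Qed.

Section Grp.
Variable V : nat.
Implicit Types (D E : dip V) (S : {set 'I_V}) (p : {perm dip V}).

Definition grp p S : rel (dip V) :=
  fun D E => lrel p D E || ((D.1 == E.1) && (D.1 \in S)).

Lemma grp_sym p S : connect_sym (grp p S).
Proof.
apply: sym_connect_sym => D E; rewrite /grp /lrel.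
case: (eqVneq D.1 E.1) => [e|ne] /=; first by rewrite e /= [(p E == D) || _]orbC.
by rewrite !orbF orbC.
Qed.

Lemma grp_edge p S v D E : grp p (v |: S) D E ->
  grp p S D E \/ ((D == (v,false)) || (D == (v,true))) /\ ((E == (v,false)) || (E == (v,true))).
Proof.
rewrite /grp; case/orP => [->|/andP[/eqP e]]; first by left.
rewrite in_setU1 => /orP[/eqP ev|->]; last by left; rewrite e eqxx orbT.
right; case: D E e ev => d1 d2 [e1 e2] /= <- ->.
by split; case: d2; case: e2; rewrite ?eqxx ?orbT.
Qed.

Lemma comps_grp_add p S v : comps (grp p S) <= (comps (grp p (v |: S))).+1.
Proof.
apply: (comps_edge (a := (v,false)) (b := (v,true))) => //; first exact: grp_sym.
  move=> D E; rewrite /grp => /orP[->//|/andP[h1 h]]; by rewrite h1 in_setU1 h !orbT.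
exact: grp_edge.
Qed.

Lemma comps_grp_same p S v : connect (grp p S) (v,false) (v,true) ->
  comps (grp p (v |: S)) = comps (grp p S).
Proof.
move=> c; apply: (comps_edge_eq (a := (v,false)) (b := (v,true))) => //; first exact: grp_sym.
  move=> D E; rewrite /grp => /orP[->//|/andP[h1 h]]; by rewrite h1 in_setU1 h !orbT.
exact: grp_edge.
Qed.

Lemma comps_grp_mono p S S' : S \subset S' ->
  comps (grp p S) <= comps (grp p S') + #|S' :\: S|.
Proof.
move=> sub; move e: #|S' :\: S| => n; elim: n S e sub => [|n IH] S e sub.
  have ->: S = S'.
    apply/eqP; rewrite eqEsubset sub /=; apply/subsetP => v vS'.
    by apply: contraT => vS; move: e; rewrite (cardsD1 v) inE vS vS'.
  by rewrite addn0.
have [v vD]: exists v, v \in S' :\: S.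
  by apply/set0Pn; rewrite -card_gt0 e.
move: (vD); rewrite inE => /andP[vS vS'].
have e': #|S' :\: (v |: S)| = n.
  have -> : S' :\: (v |: S) = (S' :\: S) :\ v.
    by apply/setP => w; rewrite !inE; case: (w == v).
  by move: e; rewrite (cardsD1 v) vD add1n => -[].
have sub': v |: S \subset S' by rewrite subUset sub sub1set vS'.
apply: leq_trans (comps_grp_add p S v) _.
by rewrite addnS ltnS; apply: IH.
Qed.

Lemma comps_grp0 p : comps (grp p set0) = #|porbits p|.
Proof.
rewrite -comps_lrel; apply: comps_eq2; apply: eq_connect => D E.
by rewrite /grp inE andbF orbF.
Qed.

Lemma comps_le1 p S : (forall D E, connect (grp p S) D E) -> comps (grp p S) <= 1.
Proof.
move=> c; rewrite -(cards1 (setT : {set dip V})); apply: subset_leq_card.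
apply/subsetP => C /imsetP[D _ ->]; rewrite inE; apply/eqP/setP => E.
by rewrite !inE c.
Qed.

Lemma porbits_le_conn p : (forall D E, connect (grp p setT) D E) -> #|porbits p| <= V.+1.
Proof.
move=> c; rewrite -comps_grp0.
have := comps_grp_mono p (sub0set setT); rewrite setD0 cardsT card_ord.
move: (comps_le1 c) => h1 h2; lia.
Qed.

End Grp.


Section Nx.
Variables (V : nat) (G0 : feyngraph V).
Hypotheses (wf0 : wf_graph G0) (vac0 : vacuum G0).
Implicit Types (D E : dip V) (S : {set 'I_V}).

Definition nx0 D : dip V := dipof (odflt (dwhite D) (prop G0 (dwhite D))).

Lemma prop0_white0 D : prop G0 (dwhite D) = Some (dblack (nx0 D)).
Proof.
rewrite /nx0; case h: (prop G0 (dwhite D)) => [y|]; last by case: (vac0 h).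
have [_ bxy]:= wf0 h; have by_: black y by move: bxy; rewrite black_dwhite; case: (black y).
by rewrite /= dblackE.
Qed.

Lemma nx0_inj : injective nx0.
Proof.
move=> D E e; have h1 := prop0_white0 D; have h2 := prop0_white0 E.
rewrite e in h1; have [h1' _] := wf0 h1; have [h2' _] := wf0 h2.
by apply: dwhite_inj; move: h1'; rewrite h2' => /(congr1 (odflt (dwhite D))) /= ->.
Qed.

Definition nx : {perm dip V} := perm nx0_inj.

Lemma prop0_white D : prop G0 (dwhite D) = Some (dblack (nx D)).
Proof. by rewrite permE prop0_white0. Qed.

Lemma prop0_black D : prop G0 (dblack (nx D)) = Some (dwhite D).
Proof. by have [] := wf0 (prop0_white D). Qed.

Lemma prop0_cases x y : prop G0 x = Some y ->
  (exists F, x = dwhite F /\ y = dblack (nx F)) \/ (exists F, x = dblack (nx F) /\ y = dwhite F).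
Proof.
move=> h; have [h' bxy] := wf0 h.
case bx: (black x).
  have by0: ~~ black y by move: bxy; rewrite bx; case: (black y).
  right; exists (dipof y); rewrite dwhiteE //; split => //.
  by have := prop0_white (dipof y); rewrite dwhiteE // h' => /(congr1 (odflt x)) /= ->.
left; exists (dipof x); rewrite dwhiteE ?bx //; split => //.
by have := prop0_white (dipof x); rewrite dwhiteE ?bx // h => /(congr1 (odflt y)) /= ->.
Qed.

Lemma looprel_lrel : looprel G0 =2 lrel nx.
Proof.
move=> D E; rewrite /looprel /lrel !prop0_white.
by rewrite !(inj_eq (@Some_inj _)) !(inj_eq (@dblack_inj V)).
Qed.

Definition phiS S : {perm dip V} := (perm (@tauS_inj V S) * nx)%g.

Lemma phiSE S D : phiS S D = nx (tauS S D).
Proof. by rewrite permM; congr (fun_of_perm nx _); rewrite permE. Qed.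

Lemma phiS0 : phiS set0 = nx.
Proof. by apply/permP => D; rewrite phiSE tauS0. Qed.

Lemma phiS_tperm S v : v \notin S ->
  phiS (v |: S) = (tperm (v,false) (v,true) * phiS S)%g.
Proof.
move=> vS; apply/permP => D; rewrite phiSE permM phiSE; congr (fun_of_perm nx _).
case: D => w b; rewrite /tauS /flipd in_setU1 /=.
case: (eqVneq w v) => [->|wv] /=.
  by case: b; rewrite ?tpermL ?tpermR /= (negbTE vS).
rewrite tpermD //; apply/eqP => -[] e; by rewrite e eqxx in wv.
Qed.

Lemma porbit_phi_conn S D E : E \in porbit (phiS S) D -> connect (grp nx S) D E.
Proof.
case/porbitP => i ->; elim: i => [|i IH]; first by rewrite expg0 perm1 connect0.
apply: connect_trans IH _; rewrite expgSr permM; move: ((phiS S ^+ i)%g D) => F.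
rewrite phiSE; apply: (@connect_trans _ _ (tauS S F)).
  rewrite /tauS; case FS: (F.1 \in S); last exact: connect0.
  by apply: connect1; rewrite /grp /= eqxx FS orbT.
by apply: connect1; rewrite /grp /lrel eqxx.
Qed.

End Nx.

Section Tree.
Variables (V : nat) (G0 : feyngraph V).
Hypotheses (wf0 : wf_graph G0) (vac0 : vacuum G0) (tree : theta_tree G0).
Implicit Types (D E : dip V) (S : {set 'I_V}).

Local Notation nx := (nx wf0 vac0).

Lemma porbits_nx : #|porbits nx| = V.+1.
Proof.
rewrite -(proj2 tree) -comps_lrel /comps; apply: eq_card => C.
rewrite /loop_vertices inE; apply/imsetP/existsP => [[D _ ->]|[D /eqP ->]]; exists D => //.
  by apply/eqP/setP => E; rewrite !inE (eq_connect (looprel_lrel wf0 vac0)).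
by apply/setP => E; rewrite !inE (eq_connect (looprel_lrel wf0 vac0)).
Qed.

Lemma conn_all D E : connect (grp nx setT) D E.
Proof.
have := proj1 tree D E; apply: connect_sub => F F' h; apply: connect1.
by move: h; rewrite /thetarel /grp (looprel_lrel wf0 vac0) inE andbT.
Qed.

Lemma no_conn S v : v \notin S -> ~~ connect (grp nx S) (v,false) (v,true).
Proof.
move=> vS; apply/negP => c.
have h1 := comps_grp_same c.
have h2 := comps_grp_mono nx (sub0set S); rewrite setD0 comps_grp0 porbits_nx in h2.
have h3 := comps_grp_mono nx (subsetT (v |: S)).
have h4 := comps_le1 (@conn_all).
have h5 : #|S| + #|~: (v |: S)| + 1 = V.
  by rewrite -[X in _ = X]card_ord -(cardsC (v |: S)) cardsU1 vS /=; lia.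
rewrite setTD h1 in h3; lia.
Qed.

Lemma porbits_phi S : #|porbits (phiS wf0 vac0 S)| + #|S| = V.+1.
Proof.
move e: #|S| => n; elim: n S e => [|n IH] S e.
  by move/eqP: e; rewrite cards_eq0 => /eqP ->; rewrite phiS0 porbits_nx addn0.
have [v vS]: exists v, v \in S by apply/set0Pn; rewrite -card_gt0 e.
have defS: S = v |: (S :\ v) by rewrite setD1K.
have vS': v \notin S :\ v by rewrite !inE eqxx.
have e': #|S :\ v| = n by move: e; rewrite (cardsD1 v) vS add1n => -[].
have H := porbits_mul_tperm (phiS wf0 vac0 (S :\ v)) (v,false) (v,true).
simpl in H; rewrite -phiS_tperm // -defS in H.
have h2 : ((v,false) \notin porbit (phiS wf0 vac0 (S :\ v)) (v,true)) = true.
  apply/negP => /porbit_phi_conn c; move: (no_conn vS'); rewrite grp_sym c //.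
have ne : ((v,false) != (v,true) :> dip V) by apply/eqP => -[].
rewrite h2 ne /= in H.
rewrite -addnn in H; move: H (IH _ e'); set a := #|porbits (phiS wf0 vac0 S)|; set b := #|porbits (phiS wf0 vac0 (S :\ v))|. clearbody a b; rewrite /nat_of_bool; lia.
Qed.

End Tree.


Section Faces.
Variables (V : nat) (G0 H : feyngraph V).
Hypotheses (wf0 : wf_graph G0) (vac0 : vacuum G0) (wfH : wf_graph H)
  (sub : forall x y, prop H x = Some y -> prop G0 x = Some y).
Variable j : 'I_6.
Implicit Types (x y : node V) (D E : dip V).

Local Notation nx := (nx wf0 vac0).
Local Notation tau := (tauS (colS H j)).
Local Notation phi := (phiS wf0 vac0 (colS H j)).

Definition key x : dip V := if black x then dipof x else tau (dipof x).
Definition frel0 : rel (node V) := fun x y => (y == cpart H j x) || (prop G0 x == Some y).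
Definition FS (O : {set dip V}) : {set node V} := [set y | key y \in O].

Lemma key_dblack D : key (dblack D) = D.
Proof. by rewrite /key black_dblack dipof_dblack. Qed.
Lemma key_dwhite D : key (dwhite D) = tau D.
Proof. by rewrite /key black_dwhite dipof_dwhite. Qed.

Lemma key_cpart x : key (cpart H j x) = key x.
Proof.
case bx: (black x).
  by rewrite -(dblackE bx) cpart_dblack key_dwhite key_dblack tauSK.
by rewrite -(dwhiteE (negbT bx)) cpart_dwhite key_dwhite key_dblack.
Qed.

Lemma phi_tau D : phi (tau D) = nx D.
Proof. by rewrite phiSE tauSK. Qed.

Lemma porbit_phi1 D : porbit phi (phi D) = porbit phi D.
Proof. by rewrite -(porbit_perm phi 1 D) expg1. Qed.

Lemma frel0_porbit x y : frel0 x y -> porbit phi (key y) = porbit phi (key x).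
Proof.
case/orP => [/eqP->|/eqP h]; first by rewrite key_cpart.
case: (prop0_cases wf0 vac0 h) => -[F [-> ->]].
  by rewrite key_dblack key_dwhite -phi_tau porbit_phi1.
by rewrite key_dblack key_dwhite -phi_tau porbit_phi1.
Qed.

Lemma frel0_sym : connect_sym frel0.
Proof.
apply: sym_connect_sym => x y; rewrite /frel0.
congr orb; first by apply/eqP/eqP => ->; rewrite cpartK.
by apply/eqP/eqP => /wf0 [].
Qed.

Lemma conn0_porbit x y : connect frel0 x y -> key y \in porbit phi (key x).
Proof.
apply: (conn_ind (P := fun u => key u \in porbit phi (key x))); last exact: porbit_id.
by move=> u w; rewrite -!eq_porbit_mem => /eqP <- /frel0_porbit ->.
Qed.

Lemma conn0_key x : connect frel0 x (dblack (key x)).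
Proof.
case bx: (black x); first by rewrite /key bx dblackE // connect0.
have ex := dwhiteE (negbT bx); move: (dipof x) ex => F <-.
by apply: connect1; rewrite /frel0 key_dwhite cpart_dwhite eqxx.
Qed.

Lemma conn0_step D : connect frel0 (dblack D) (dblack (phi D)).
Proof.
apply: (@connect_trans _ _ (dwhite (tau D))).
  by apply: connect1; rewrite /frel0 cpart_dblack eqxx.
by apply: connect1; rewrite /frel0 prop0_white phiSE eqxx orbT.
Qed.

Lemma porbit_conn0 x y : key y \in porbit phi (key x) -> connect frel0 x y.
Proof.
move=> h; apply: connect_trans (conn0_key x) _.
rewrite frel0_sym; apply: connect_trans (conn0_key y) _; rewrite frel0_sym.
case/porbitP: h => i ->; elim: i => [|i IH]; first by rewrite expg0 perm1 connect0.
apply: connect_trans IH _; rewrite expgSr permM; exact: conn0_step.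
Qed.

Lemma face0E x : [set y | connect frel0 x y] = FS (porbit phi (key x)).
Proof.
apply/setP => y; rewrite !inE; apply/idP/idP; first exact: conn0_porbit.
exact: porbit_conn0.
Qed.

Lemma facerel_sub x y : facerel H j x y -> frel0 x y.
Proof. by rewrite /facerel /frel0 => /orP[->//|/eqP/sub ->]; rewrite eqxx orbT. Qed.

Lemma conn_face_sub x y : connect (facerel H j) x y -> connect frel0 x y.
Proof. by apply: connect_sub => u w /facerel_sub /connect1. Qed.

Lemma face_internal x : (forall y, connect frel0 x y -> ~~ external H y) ->
  face_of H j x = [set y | connect frel0 x y].
Proof.
move=> hint; apply/setP => y; rewrite !inE; apply/idP/idP; first exact: conn_face_sub.
apply: (conn_ind (P := fun u => connect (facerel H j) x u)); last exact: connect0.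
move=> u w cu /orP[/eqP->|/eqP pu].
  by apply: connect_trans cu (connect1 _); rewrite /facerel eqxx.
have := hint _ (conn_face_sub cu); rewrite /external.
case hu: (prop H u) => [z|] // _; have := sub hu; rewrite pu => -[] ez.
by apply: connect_trans cu (connect1 _); rewrite /facerel hu ez eqxx orbT.
Qed.

Definition Xk := [set key y | y in ext_nodes H].

Lemma FS_inj : injective FS.
Proof.
move=> O O' e; apply/setP => D.
have: (dblack D \in FS O) = (dblack D \in FS O') by rewrite e.
by rewrite !inE key_dblack.
Qed.

Lemma closed_facesE :
  closed_faces_j H j = FS @: [set O in porbits phi | [disjoint O & Xk]].
Proof.
apply/setP => C; rewrite inE; apply/existsP/imsetP => [[x /andP[/eqP -> /forallP hC]]|].
  have hint : forall y, connect frel0 x y -> ~~ external H y.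
    move=> y cy; apply: contraT; rewrite negbK => ey.
    suff: y \in face_of H j x by move/(implyP (hC y)); rewrite ey.
    rewrite inE; apply: (conn_ind (P := fun u => connect (facerel H j) x u)) cy; last exact: connect0.
    move=> u w cu /orP[/eqP->|/eqP pu].
      by apply: connect_trans cu (connect1 _); rewrite /facerel eqxx.
    have := implyP (hC u); rewrite inE cu => /(_ isT); rewrite /external.
    case hu: (prop H u) => [z|] // _; have := sub hu; rewrite pu => -[] ez.
    by apply: connect_trans cu (connect1 _); rewrite /facerel hu ez eqxx orbT.
  exists (porbit phi (key x)); last by rewrite (face_internal hint) (face0E x).
  rewrite inE imset_f //=; apply/pred0P => D /=; apply/negP => /andP[DO /imsetP[y]].
  rewrite inE => ey eD; have: y \in FS (porbit phi (key x)) by rewrite inE -eD.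
  by rewrite -face0E inE => /hint; rewrite ey.
move=> [O]; rewrite inE => /andP[/imsetP[D _ ->] dis] ->.
have hint : forall y, connect frel0 (dblack D) y -> ~~ external H y.
  move=> y cy; have: y \in FS (porbit phi (key (dblack D))) by rewrite -face0E inE.
  rewrite inE key_dblack => yO; apply/negP => ey.
  by move/pred0P: dis => /(_ (key y)) /=; rewrite yO imset_f // inE.
have e2 := face0E (dblack D); rewrite key_dblack in e2.
exists (dblack D); rewrite (face_internal hint) e2 eqxx /=.
apply/forallP => y; apply/implyP; rewrite -e2 inE; exact: hint.
Qed.

Lemma card_closed :
  #|closed_faces_j H j| = #|[set O in porbits phi | [disjoint O & Xk]]|.
Proof. by rewrite closed_facesE card_imset //; exact: FS_inj. Qed.

End Faces.


Section OnePI.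
Variables (V : nat) (G0 G : feyngraph V).
Hypotheses (wf0 : wf_graph G0) (vac0 : vacuum G0) (tree : theta_tree G0)
  (wfG : wf_graph G) (sub : forall x y, prop G x = Some y -> prop G0 x = Some y).
Implicit Types (x y : node V) (D E F : dip V).

Local Notation nx := (nx wf0 vac0).

Lemma ext_white_black D : external G (dwhite D) -> external G (dblack (nx D)).
Proof.
rewrite /external => /eqP hw; apply/eqP; case h: (prop G _) => [z|] //.
have := sub h; rewrite prop0_black => -[ez]; subst z.
by have [] := wfG h; rewrite hw.
Qed.

Lemma ext_black_white D : external G (dblack (nx D)) -> external G (dwhite D).
Proof.
rewrite /external => /eqP hw; apply/eqP; case h: (prop G _) => [z|] //.
have := sub h; rewrite prop0_white => -[ez]; subst z.
by have [] := wfG h; rewrite hw.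
Qed.

Lemma propG_some x z : prop G x = Some z -> prop G0 x = Some z.
Proof. exact: sub. Qed.

Lemma no_two_cut D (R : rel (node V)) :
  external G (dwhite D) -> nx D != D ->
  (forall x y, connect R x y) ->
  (forall x y, R x y -> (x.1 == y.1) \/
     (prop G x = Some y /\ ~~ ((x == dwhite (nx D)) && (y == dblack (nx (nx D)))) /\
                         ~~ ((x == dblack (nx (nx D))) && (y == dwhite (nx D))))) ->
  False.
Proof.
move=> extD neD conn hR.
set E := nx D.
pose p' := (tperm D E * nx)%g.
have p'E X : p' X = nx (tperm D E X) by rewrite permM.
have hp: #|porbits p'| = V.+2.
  have := porbits_mul_tperm nx D E; rewrite /= -/p'.
  have -> : (D \notin porbit nx E) = false.
    by rewrite porbit_sym; have := mem_porbit nx 1 D; rewrite expg1 => ->.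
  by rewrite (porbits_nx wf0 vac0 tree) eq_sym neD /nat_of_bool /= double0 addn0 addn1.
have step x y : R x y -> grp p' setT (dipof x) (dipof y).
  move/hR => [e|[pxy [n1 n2]]]; first by rewrite /grp inE e orbT.
  have extbD := ext_white_black extD.
  case: (prop0_cases wf0 vac0 (sub pxy)) => -[F [ex ey]]; subst x y.
  - have FD : F != D.
      by apply/eqP => e; subst F; move: extD; rewrite /external pxy.
    have FE : F != E.
      by apply/eqP => e; subst F; move: n1; rewrite /E !eqxx.
    have pF : p' F = nx F by rewrite p'E tpermD // eq_sym.
    by rewrite /grp /lrel dipof_dwhite dipof_dblack pF eqxx.
  - have FD : F != D.
      by apply/eqP => e; subst F; move: extbD; rewrite /external pxy.
    have FE : F != E.
      by apply/eqP => e; subst F; move: n2; rewrite /E !eqxx.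
    have pF : p' F = nx F by rewrite p'E tpermD // eq_sym.
    by rewrite /grp /lrel dipof_dwhite dipof_dblack pF eqxx orbT.
have call X Y : connect (grp p' setT) X Y.
  rewrite -(dipof_dblack X) -(dipof_dblack Y).
  apply: (conn_map (e := R)) => // x y /step; exact: connect1.
have := porbits_le_conn call; rewrite hp; lia.
Qed.

Lemma ext_white_fixed D : onePI G -> external G (dwhite D) -> nx D = D.
Proof.
move=> [conn cut] extD; apply/eqP; apply: contraT => neD; exfalso.
set E := nx D.
case extE: (external G (dwhite E)).
  apply: (no_two_cut (R := Defs.grel G) extD neD conn) => x y /orP[e|/eqP pxy]; first by left.
  right; split => //; split; apply/negP => /andP[/eqP ex /eqP ey]; subst x y.
    by move: extE; rewrite /external pxy.
  by move: (ext_white_black extE); rewrite /external pxy.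
have pE : prop G (dwhite E) = Some (dblack (nx E)).
  move: extE; rewrite /external; case h: (prop G _) => [z|] // _.
  by have := sub h; rewrite prop0_white.
apply: (no_two_cut (R := grel_cut G (dwhite E) (dblack (nx E))) extD neD (cut _ _ pE)).
move=> x y /orP[e|/andP[/eqP pxy hn]]; first by left.
right; split => //; rewrite negb_or in hn; case/andP: hn => h1 h2; split => //.
Qed.

End OnePI.


Lemma porbit_iter (T : finType) (s : {perm T}) x y :
  y \in porbit s x -> exists n, iter n s x = y.
Proof. by rewrite porbit_traject => /trajectP[i _ ->]; exists i. Qed.

Lemma iter_mod (T : Type) (f : T -> T) a n k :
  iter n.+1 f a = a -> iter k f a = iter (k %% n.+1) f a.
Proof.
move=> h; rewrite {1}(divn_eq k n.+1) addnC iterD; congr (iter _ f _).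
elim: (k %/ n.+1) => [|q IH]; first by rewrite mul0n. by rewrite mulSn iterD IH h.
Qed.

Section Open.
Variables (V : nat) (G0 G : feyngraph V).
Hypotheses (wf0 : wf_graph G0) (vac0 : vacuum G0) (wfG : wf_graph G)
  (sub : forall x y, prop G x = Some y -> prop G0 x = Some y).
Variable Del : {set dip V}.
Hypotheses (hfix : forall D, D \in Del -> nx wf0 vac0 D = D)
  (hext : forall x, external G x = (dipof x \in Del)).
Variable j : 'I_6.
Implicit Types (x y : node V) (D E F : dip V).

Local Notation nx := (nx wf0 vac0).
Local Notation tau := (tauS (colS G j)).
Local Notation phi := (phiS wf0 vac0 (colS G j)).
Local Notation psi := (phi^-1)%g.
Local Notation key := (key G j).

Definition Head E D := D \in Del /\ exists n, iter n psi E = D /\ forall i, i < n -> iter i psi E \notin Del.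

Lemma head_uniq E D D' : Head E D -> Head E D' -> D = D'.
Proof.
move=> [dD [n [e1 h1]]] [dD' [n' [e2 h2]]].
case: (ltngtP n n') => [lt|lt|eq]; last by rewrite -e1 -e2 eq.
  by move: (h2 _ lt); rewrite e1 dD.
by move: (h1 _ lt); rewrite e2 dD'.
Qed.

Lemma head_refl D : D \in Del -> Head D D.
Proof. by move=> dD; split => //; exists 0. Qed.

Lemma head_exists E n : iter n psi E \in Del -> exists D, Head E D.
Proof.
move=> h; have exP : exists n, iter n psi E \in Del by exists n.
case: (ex_minnP exP) => m Pm minm; exists (iter m psi E); split => //.
exists m; split => // i lt; apply/negP => Pi; move: (minm _ Pi); rewrite leqNgt lt.
by [].
Qed.

Lemma psi_phi E : psi (phi E) = E.
Proof. exact: permK. Qed.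

Lemma phi_notin E : tau E \notin Del -> phi E \notin Del.
Proof.
move=> tE; apply/negP => pE.
have e : phi E = tau E by apply: (@perm_inj _ nx); rewrite (hfix pE) phiSE.
by move: tE; rewrite -e pE.
Qed.

Lemma head_fwd E D : tau E \notin Del -> Head E D -> Head (phi E) D.
Proof.
move=> tE [dD [n [e h]]]; split => //; exists n.+1; split; first by rewrite iterSr psi_phi.
case=> [_|i lt]; first exact: phi_notin.
by rewrite iterSr psi_phi; apply: h.
Qed.

Lemma head_bwd E D : tau E \notin Del -> Head (phi E) D -> Head E D.
Proof.
move=> tE [dD [[|n] [e h]]].
  by move: (phi_notin tE); rewrite /= in e; rewrite e dD.
split => //; exists n; split; first by rewrite -e iterSr psi_phi.
by move=> i lt; move: (h i.+1 lt); rewrite iterSr psi_phi.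
Qed.

Lemma internal_white F : F \notin Del -> prop G (dwhite F) = Some (dblack (nx F)).
Proof.
move=> nF; move: (hext (dwhite F)); rewrite dipof_dwhite (negbTE nF) /external.
case h: (prop G _) => [z|] // _; by rewrite -(sub h) prop0_white.
Qed.

Lemma facerel_sym : connect_sym (facerel G j).
Proof.
apply: sym_connect_sym => x y; rewrite /facerel; congr orb.
  by apply/eqP/eqP => ->; rewrite cpartK.
by apply/eqP/eqP => /wfG [].
Qed.

Lemma head_facerel u w D : facerel G j u w -> Head (key u) D -> Head (key w) D.
Proof.
case/orP => [/eqP->|/eqP h]; first by rewrite key_cpart.
case: (prop0_cases wf0 vac0 (sub h)) => -[F [eu ew]]; subst u w.
  have nF : F \notin Del by rewrite -(dipof_dwhite F) -hext /external h.
  rewrite key_dwhite key_dblack -(phi_tau G wf0 vac0 j); apply: head_fwd.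
  by rewrite tauSK.
have nF : F \notin Del.
  by rewrite -(dipof_dwhite F) -hext /external (proj1 (wfG h)).
rewrite key_dwhite key_dblack -(phi_tau G wf0 vac0 j); apply: head_bwd.
by rewrite tauSK.
Qed.

Lemma conn_head x y D : connect (facerel G j) x y -> Head (key x) D -> Head (key y) D.
Proof.
move=> c hx; apply: (conn_ind (P := fun u => Head (key u) D)) c => // u w hu f.
exact: head_facerel f hu.
Qed.

Lemma step_conn E : tau E \notin Del -> connect (facerel G j) (dblack E) (dblack (phi E)).
Proof.
move=> tE; apply: (@connect_trans _ _ (dwhite (tau E))).
  by apply: connect1; rewrite /facerel cpart_dblack eqxx.
by apply: connect1; rewrite /facerel internal_white // phiSE eqxx orbT.
Qed.

Lemma head_conn E D : Head E D -> connect (facerel G j) (dblack D) (dblack E).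
Proof.
move=> [dD [n [e h]]]; elim: n E e h => [|n IH] E e h; first by rewrite -e connect0.
have e' : iter n psi (psi E) = D by rewrite -iterSr.
have h' : forall i, i < n -> iter i psi (psi E) \notin Del.
  by move=> i lt; rewrite -iterSr; apply: h.
apply: connect_trans (IH _ e' h') _.
suff tE : tau (psi E) \notin Del by move: (step_conn tE); rewrite permKV.
apply/negP => tin.
have : phi (psi E) \in Del by rewrite phiSE hfix.
by rewrite permKV => EDel; move: (h 0 isT); rewrite /= EDel.
Qed.

Lemma key_conn x : connect (facerel G j) x (dblack (key x)).
Proof.
case bx: (black x); first by rewrite /key bx dblackE // connect0.
have ex := dwhiteE (negbT bx); move: (dipof x) ex => F <-.
by apply: connect1; rewrite /facerel key_dwhite cpart_dwhite eqxx.
Qed.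

Lemma ext_head x : external G x -> exists D, Head (key x) D.
Proof.
rewrite hext => xD.
case bx: (black x).
  by exists (dipof x); rewrite /key bx; exact: head_refl.
rewrite /key bx.
have : dipof x \in porbit psi (tau (dipof x)).
  rewrite porbitV; have := mem_porbit phi 1 (tau (dipof x)).
  by rewrite expg1 phiSE tauSK hfix.
by case/porbit_iter => n e; apply: (head_exists (n := n)); rewrite e.
Qed.

Lemma card_open : #|open_faces_j G j| = #|Del|.
Proof.
pose fo D := face_of G j (dblack D).
have -> : open_faces_j G j = fo @: Del.
  apply/setP => C; rewrite inE; apply/existsP/imsetP => [[x /andP[/eqP -> /existsP[y /andP[yC ey]]]]|[D dD ->]].
    have [D hD] := ext_head ey; exists D; first exact: (proj1 hD).
    rewrite /fo; apply/setP => z; rewrite !inE.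
    have cDy : connect (facerel G j) (dblack D) y.
      apply: connect_trans (head_conn hD) _; rewrite facerel_sym; exact: key_conn.
    move: yC; rewrite inE => cxy.
    apply/idP/idP => h.
      by apply: connect_trans cDy (connect_trans _ h); rewrite facerel_sym.
    by apply: connect_trans cxy (connect_trans _ h); rewrite facerel_sym.
  exists (dblack D); rewrite /fo eqxx /=; apply/existsP; exists (dblack D).
  by rewrite !inE connect0 hext dipof_dblack.
rewrite card_in_imset // => D D' dD dD' e.
have : dblack D' \in fo D by rewrite e inE connect0.
rewrite inE => /conn_head; rewrite !key_dblack => /(_ _ (head_refl dD)) h.
exact: head_uniq h (head_refl dD').
Qed.

Lemma iter_face n x z : iter n (face_step G j) (Some x) = Some z ->
  connect (facerel G j) x z /\ black z = black x.
Proof.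
elim: n z => [|n IH] z /=; first by case=> <-; split => //; exact: connect0.
case h: (iter n _ _) => [z0|] //= hz.
have [c b] := IH _ h; split.
  apply: connect_trans c _; apply: (@connect_trans _ _ (cpart G j z0)); apply: connect1.
    by rewrite /facerel eqxx.
  by rewrite /facerel hz eqxx orbT.
have [_ bb] := wfG hz; move: bb; rewrite cpart_black b.
by case: (black x); case: (black z).
Qed.

Lemma face_conn_ends x y : face_connects G j x y ->
  connect (facerel G j) x y /\ black y = ~~ black x.
Proof.
move=> [_ [n [z [h [<- _]]]]]; have [c b] := iter_face h; split.
  by apply: connect_trans c (connect1 _); rewrite /facerel eqxx.
by rewrite cpart_black b.
Qed.

Lemma no_return D E : D \in Del -> E \in Del -> E != D -> E \in porbit phi D ->
  ~~ connect (facerel G j) (dblack D) (dwhite D).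
Proof.
move=> dD dE ne EO; apply/negP => c.
have h0 : Head (key (dblack D)) D by rewrite key_dblack; exact: head_refl.
have := conn_head c h0; rewrite key_dwhite => -[_ [n [e h]]].
have pt : phi (tau D) = D by rewrite (phi_tau G wf0 vac0 j) hfix.
have ps : psi D = tau D by rewrite -{1}pt psi_phi.
have per : iter n.+1 psi (tau D) = tau D by rewrite iterS e ps.
have : E \in porbit psi (tau D).
  have := porbit_perm phi 1 (tau D); rewrite expg1 pt => e2.
  by rewrite porbitV -e2.
case/porbit_iter => k ek; rewrite (iter_mod k per) in ek.
have : k %% n.+1 < n.+1 by rewrite ltn_pmod.
rewrite ltnS leq_eqVlt => /orP[/eqP r|r].
  by move: ne; rewrite -ek r e eqxx.
by move: (h _ r); rewrite ek dE.
Qed.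

End Open.


Lemma card_set_sum (T : finType) (P : pred T) : #|[set x | P x]| = \sum_x P x.
Proof.
rewrite -sum1_card big_mkcond /=; apply: eq_bigr => x _.
by rewrite inE; case: (P x).
Qed.

Lemma sum_eq6 (c : 'I_6) : \sum_(j < 6) (j == c) = 1.
Proof.
rewrite (bigD1 c) // eqxx big1 ?addn0 // => j /negbTE ->.
by [].
Qed.

Lemma sum_ne6 (c : 'I_6) : \sum_(j < 6) (j != c) = 5.
Proof.
have : \sum_(j < 6) ((j == c) + (j != c)) = 6.
  rewrite (eq_bigr (fun _ => 1)); first by rewrite sum_nat_const card_ord.
  by move=> j _; case: (j == c).
rewrite big_split sum_eq6 => h; apply/eqP; by rewrite -(eqn_add2l 1) h.
Qed.

Lemma sum_ge1 (I : finType) (f : I -> nat) a : f a <= \sum_i f i.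
Proof. by rewrite (bigD1 a) //= leq_addr. Qed.

Lemma sum_ge2 (I : finType) (f : I -> nat) a b : a != b -> f a + f b <= \sum_i f i.
Proof.
move=> ab; rewrite (bigD1 a) // leq_add2l (bigD1 b) /=; first exact: leq_addr.
by rewrite eq_sym.
Qed.

Lemma card_split (T : finType) (A : {set T}) (P : pred T) :
  #|[set x in A | P x]| + #|[set x in A | ~~ P x]| = #|A|.
Proof.
rewrite -(cardsID [set x | P x] A); congr (_ + _); apply: eq_card => x; rewrite !inE //.
by rewrite andbC.
Qed.

Lemma porbit_fixed (T : finType) (s : {perm T}) x : s x = x -> porbit s x = [set x].
Proof.
move=> h; apply/setP => y; rewrite inE; apply/porbitP/eqP => [[i ->]|->]; last by exists 0; rewrite expg0 perm1.
by elim: i => [|i IH]; rewrite ?expg0 ?perm1 // expgSr permM IH h.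
Qed.


Section Main.
Variables (V : nat) (G G0 : feyngraph V).
Hypotheses (wfG : wf_graph G) (wf0 : wf_graph G0) (vac0 : vacuum G0) (tree : theta_tree G0)
  (sub : forall x y, prop G x = Some y -> prop G0 x = Some y) (pi : onePI G).
Implicit Types (x y : node V) (D E F : dip V).

Local Notation nx := (nx wf0 vac0).

Definition Del := [set D | external G (dwhite D)].

Lemma hfix D : D \in Del -> nx D = D.
Proof. by rewrite inE => h; exact: (ext_white_fixed wf0 vac0 tree wfG sub pi h). Qed.

Lemma hext x : external G x = (dipof x \in Del).
Proof.
case bx: (black x); last by rewrite -{1}(dwhiteE (negbT bx)) inE.
rewrite -{1}(dblackE bx); move: (dipof x) => D; apply/idP/idP => h.
  have e : nx (nx^-1 D)%g = D by rewrite permKV.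
  have := @ext_black_white _ G0 G wf0 vac0 wfG sub (nx^-1 D)%g; rewrite e => /(_ h) h'.
  have hD : (nx^-1 D)%g \in Del by rewrite inE.
  by move: (hfix hD); rewrite e => ->.
have := ext_white_black wf0 vac0 wfG sub (D := D); rewrite hfix //; apply; by rewrite inE in h.
Qed.

Lemma ext_nodesE : ext_nodes G = (@dblack V) @: Del :|: (@dwhite V) @: Del.
Proof.
apply/setP => x; rewrite in_setU inE hext.
case bx: (black x).
  rewrite -(dblackE bx) dipof_dblack; apply/idP/orP => [h|[/imsetP[E EDel /dblack_inj->]//|/imsetP[E _ e]]].
    by left; apply: imset_f.
  by move: (dblack_dwhite (dipof x) E); rewrite e eqxx.
rewrite -(dwhiteE (negbT bx)) dipof_dwhite; apply/idP/orP => [h|[/imsetP[E _ e]|/imsetP[E EDel /dwhite_inj->]//]].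
  by right; apply: imset_f.
by move: (dblack_dwhite E (dipof x)); rewrite e eqxx.
Qed.

Lemma card_ext : #|ext_nodes G| = #|Del| + #|Del|.
Proof.
rewrite ext_nodesE cardsU !card_imset; try (exact: dblack_inj || exact: dwhite_inj).
suff -> : (@dblack V) @: Del :&: (@dwhite V) @: Del = set0 by rewrite cards0 subn0.
apply/setP => x; rewrite !inE; apply/negP => /andP[/imsetP[D _ ->] /imsetP[E _ e]].
by move: (dblack_dwhite D E); rewrite e eqxx.
Qed.

Lemma card_Del_sum : #|Del| = \sum_D (D \in Del).
Proof. by rewrite -sum1_card big_mkcond /=; apply: eq_bigr => D _; case: (D \in Del). Qed.

Definition phij j := phiS wf0 vac0 (colS G j).

Lemma Xk_Del j D : D \in Del -> D \in Xk G j.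
Proof.
move=> dD; apply/imsetP; exists (dblack D); last by rewrite key_dblack.
by rewrite inE hext dipof_dblack.
Qed.

Definition hit j := [set O in porbits (phij j) | ~~ [disjoint O & Xk G j]].

Lemma closed_hit j : #|closed_faces_j G j| + #|hit j| + #|colS G j| = V.+1.
Proof.
rewrite (card_closed wf0 vac0 sub j) card_split.
exact: (porbits_phi wf0 vac0 tree).
Qed.

Definition Aj j := porbit (phij j) @: [set D in Del | j != vcol G D.1].
Definition Bj j := porbit (phij j) @: [set D in Del | j == vcol G D.1].

Lemma phij_fixed j D : D \in Del -> j != vcol G D.1 -> phij j D = D.
Proof.
move=> dD ne; rewrite /phij phiSE /tauS inE (negbTE ne); exact: hfix.
Qed.

Lemma porbit_flip j D : D \in Del -> j == vcol G D.1 -> flipd D \in porbit (phij j) D.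
Proof.
move=> dD e; rewrite porbit_sym.
have := mem_porbit (phij j) 1 (flipd D); rewrite expg1 /phij phiSE /tauS inE /flipd /= e.
by rewrite negbK -surjective_pairing hfix.
Qed.

Lemma hit_ge j : #|Aj j| + #|Bj j| <= #|hit j|.
Proof.
have dis : Aj j :&: Bj j = set0.
  apply/setP => O; rewrite !inE; apply/negP => /andP[/imsetP[D] + ->].
  rewrite inE => /andP[dD ne] /imsetP[E]; rewrite inE => /andP[dE eq] e.
  have := porbit_flip dE eq; have := porbit_id (phij j) E.
  rewrite -e (porbit_fixed (phij_fixed dD ne)) !inE => /eqP e1 /eqP e2.
  by move: (flipd_neq E); rewrite e2 e1 eqxx.
have e : #|Aj j :|: Bj j| = #|Aj j| + #|Bj j| by rewrite cardsU dis cards0 subn0.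
rewrite -e; apply: subset_leq_card; apply/subsetP => O.
have hD : forall D, D \in Del -> porbit (phij j) D \in hit j.
  move=> D dD; rewrite inE imset_f //=; apply/negP => /pred0P /(_ D).
  by rewrite /= porbit_id Xk_Del.
by rewrite in_setU => /orP[] /imsetP[D]; rewrite inE => /andP[dD _] ->; apply: hD.
Qed.

Lemma cardA j : #|Aj j| = #|[set D in Del | j != vcol G D.1]|.
Proof.
apply: card_in_imset => D E; rewrite !inE => /andP[dD nD] /andP[dE nE].
have {}dD : D \in Del by rewrite inE.
have {}dE : E \in Del by rewrite inE.
rewrite (porbit_fixed (phij_fixed dD nD)) (porbit_fixed (phij_fixed dE nE)); exact: set1_inj.
Qed.

Lemma sumA : \sum_(j < 6) #|[set D in Del | j != vcol G D.1]| = 5 * #|Del|.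
Proof.
rewrite (eq_bigr (fun j => \sum_D ((D \in Del) && (j != vcol G D.1)))); last first.
  by move=> j _; rewrite card_set_sum.
rewrite exchange_big /= card_Del_sum big_distrr /=; apply: eq_bigr => D _.
case: (D \in Del) => /=; last by rewrite muln0 big1.
by rewrite muln1 sum_ne6.
Qed.

Lemma sume : \sum_(j < 6) #|colS G j| = V.
Proof.
rewrite (eq_bigr (fun j => \sum_v (j == vcol G v))); last first.
  by move=> j _; rewrite card_set_sum.
rewrite exchange_big /=; rewrite (eq_bigr (fun _ => 1)); last by move=> v _; exact: sum_eq6.
by rewrite sum_nat_const card_ord muln1.
Qed.

Definition K := \sum_(j < 6) #|Bj j|.

Lemma nG_bound : n_closed_faces G + 5 * #|Del| + K + V <= 6 * V.+1.
Proof.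
have h1 : \sum_(j < 6) (#|closed_faces_j G j| + #|hit j| + #|colS G j|) = 6 * V.+1.
  by rewrite (eq_bigr (fun _ => V.+1)) ?sum_nat_const ?card_ord // => j _; exact: closed_hit.
rewrite !big_split /= sume in h1.
have h2 : \sum_(j < 6) (#|Aj j| + #|Bj j|) <= \sum_(j < 6) #|hit j|.
  by apply: leq_sum => j _; exact: hit_ge.
rewrite big_split /= (eq_bigr _ (fun j _ => cardA j)) sumA in h2.
rewrite /n_closed_faces /K; move: h1 h2; set a := \sum_(j < 6) #|closed_faces_j G j|; set b := \sum_(j < 6) #|hit j|; set c := \sum_(j < 6) #|Bj j|. lia.
Qed.


Lemma sum_ne0_const k : \sum_(j < 6 | j != ord0) k = 5 * k.
Proof.
rewrite big_mkcond /= (eq_bigr (fun j : 'I_6 => (j != ord0) * k)).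
  by rewrite -big_distrl /= sum_ne6.
by move=> j _; case: (j != ord0); rewrite ?mul1n ?mul0n.
Qed.

Definition G' := FGraph (fun _ : 'I_V => (ord0 : 'I_6)) (prop G).

Lemma colS'_0 j : j != ord0 -> colS G' j = set0.
Proof. by move=> nj; apply/setP => v; rewrite !inE /=; exact: negbTE. Qed.

Lemma Xk' j : j != ord0 -> Xk G' j = Del.
Proof.
move=> nj; apply/setP => D; apply/imsetP/idP => [[y ey ->]|dD].
  have ey' : external G y by move: ey; rewrite inE.
  by rewrite /key colS'_0 // tauS0 if_same -hext.
exists (dblack D); last by rewrite key_dblack.
by rewrite inE; change (external G (dblack D)); rewrite hext dipof_dblack.
Qed.

Lemma closed'_j j : j != ord0 -> #|closed_faces_j G' j| + #|Del| = V.+1.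
Proof.
move=> nj; rewrite (@card_closed _ G0 G' wf0 vac0 sub j) Xk' // colS'_0 // phiS0.
rewrite -(porbits_nx wf0 vac0 tree) -(card_split (porbits nx) (fun O => [disjoint O & Del])).
congr (_ + _).
have -> : [set O in porbits nx | ~~ [disjoint O & Del]] = (@set1 (dip V)) @: Del.
  apply/setP => O; rewrite inE; apply/andP/imsetP => [[/imsetP[X _ ->] nd]|[D dD ->]].
    case/pred0Pn: nd => D /andP[/= DO dD]; exists D => //.
    have : porbit nx D = porbit nx X by apply/eqP; rewrite eq_porbit_mem.
    by move=> <-; rewrite (porbit_fixed (hfix dD)).
  rewrite -(porbit_fixed (hfix dD)); split; first exact: imset_f.
  by apply/pred0Pn; exists D; rewrite /= porbit_id dD.
by rewrite card_imset //; exact: set1_inj.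
Qed.

Lemma nG'_bound : 5 * V.+1 <= n_closed_faces G' + 5 * #|Del|.
Proof.
have h : \sum_(j < 6 | j != ord0) (#|closed_faces_j G' j| + #|Del|) = 5 * V.+1.
  rewrite (eq_bigr (fun _ => V.+1)); last by move=> j nj; exact: closed'_j.
  exact: sum_ne0_const.
rewrite big_split /= sum_ne0_const in h.
rewrite /n_closed_faces (bigD1 ord0) //=.
move: h; set a := \sum_(j < 6 | j != ord0) #|closed_faces_j G' j|; lia.
Qed.

Hypothesis opt : forall G' : feyngraph V, wf_graph G' -> from_tree G' -> connected G' ->
  #|ext_nodes G'| = #|ext_nodes G| -> n_closed_faces G' <= n_closed_faces G.

Lemma opt_G' : n_closed_faces G' <= n_closed_faces G.
Proof.
apply: opt => //; last exact: (proj1 pi).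
exists (FGraph (fun _ : 'I_V => (ord0 : 'I_6)) (prop G0)).
by split; [exact: wf0 | split; [exact: vac0 | split; [exact: tree | split]]].
Qed.

Lemma K_le1 : K <= 1.
Proof.
have h1 := nG_bound; have h2 := nG'_bound; have h3 := opt_G'.
move: h1 h2 h3; set a := n_closed_faces G; set b := n_closed_faces G'; lia.
Qed.

Lemma inB F c : F \in Del -> c = vcol G F.1 -> porbit (phij c) F \in Bj c.
Proof. by move=> dF ->; apply: imset_f; rewrite in_set dF eqxx. Qed.

Lemma uniform D E : D \in Del -> E \in Del ->
  vcol G D.1 = vcol G E.1 /\ porbit (phij (vcol G D.1)) D = porbit (phij (vcol G D.1)) E.
Proof.
move=> dD dE; have K1 := K_le1.
case: (eqVneq (vcol G D.1) (vcol G E.1)) => [ec|nc].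
  split => //; apply/eqP; apply: contraT => ne; exfalso.
  have sub2 : [set porbit (phij (vcol G D.1)) D; porbit (phij (vcol G D.1)) E]
      \subset Bj (vcol G D.1).
    apply/subsetP => O; rewrite !inE => /orP[]/eqP->; [exact: inB dD _ | exact: inB dE _].
  have := subset_leq_card sub2; rewrite cards2 ne => h2.
  have := sum_ge1 (fun j => #|Bj j|) (vcol G D.1); rewrite -/K => h3.
  by move: (leq_trans h2 (leq_trans h3 K1)).
exfalso; have := sum_ge2 (fun j => #|Bj j|) nc; rewrite -/K => h.
have b1 : 0 < #|Bj (vcol G D.1)| by apply/card_gt0P; exists (porbit (phij (vcol G D.1)) D); exact: inB.
have b2 : 0 < #|Bj (vcol G E.1)| by apply/card_gt0P; exists (porbit (phij (vcol G E.1)) E); exact: inB.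
move: (leq_trans (leq_add b1 b2) (leq_trans h K1)); by [].
Qed.

Definition j0 := if [pick D in Del] is Some D then vcol G D.1 else ord0.

Lemma Del_col D : D \in Del -> vcol G D.1 = j0.
Proof.
move=> dD; rewrite /j0; case: pickP => [D1 dD1|none]; first exact: (proj1 (uniform dD dD1)).
by move: (none D); rewrite dD.
Qed.

Lemma Del_orbit D E : D \in Del -> E \in Del -> E \in porbit (phij j0) D.
Proof.
move=> dD dE; have [_ e] := uniform dD dE; rewrite -(Del_col dD) e; exact: porbit_id.
Qed.

Lemma final N : #|ext_nodes G| = N.*2 ->
  exists (j : 'I_6) (P : {set node V * node V}),
    [/\ forall p, p \in P -> dipole G j p.1 p.2 /\ external G p.1 /\ external G p.2,
        forall x, external G x -> #|[set p in P | (p.1 == x) || (p.2 == x)]| = 1,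
        #|P| = N,
        #|open_faces_j G j| = N &
        (1 < N -> forall x y, face_connects G j x y ->
           forall p q, p \in P -> q \in P ->
             (x == p.1) || (x == p.2) -> (y == q.1) || (y == q.2) -> p != q)].
Proof.
move=> cardN.
have hN : N = #|Del| by move: cardN; rewrite card_ext -addnn; set m := #|Del|; lia.
exists j0, [set ((@dblack V D), (@dwhite V D)) | D in Del]; split.
- move=> p /imsetP[D dD ->] /=; split; last by rewrite !hext dipof_dblack dipof_dwhite dD.
  split; first exact: black_dblack.
  split; first by rewrite black_dwhite.
  move=> k nk; rewrite cpart_dblack /tauS inE.
  by have -> : (k == vcol G D.1) = false by rewrite (Del_col dD); exact: negbTE.
- move=> x ex; rewrite hext in ex.
  have -> : [set p in [set ((@dblack V D), (@dwhite V D)) | D in Del] | (p.1 == x) || (p.2 == x)]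
      = [set ((@dblack V (dipof x)), (@dwhite V (dipof x)))].
    apply/setP => p; rewrite in_set in_set1; apply/andP/eqP => [[/imsetP[E dE ->] /= h]|->].
      by case/orP: h => /eqP ex'; rewrite -ex' ?dipof_dblack ?dipof_dwhite.
    split; first exact: imset_f.
    rewrite /=; case bx: (black x); first by rewrite dblackE // eqxx.
    by rewrite dwhiteE ?bx // eqxx orbT.
  exact: cards1.
- rewrite card_imset ?hN //; move=> D E /(congr1 fst) /=; exact: dblack_inj.
- by rewrite hN; exact: (card_open wfG sub hfix hext j0).
move=> N1 x y fc p q /imsetP[D dD ->] /imsetP[D' dD' ->] hx hy.
apply/eqP => epq; have eD : D' = D by move: epq => /(congr1 fst) /= /dblack_inj.
subst D'.
have [c b] := face_conn_ends wfG fc.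
have conn : connect (facerel G j0) (dblack D) (dwhite D).
  move: hx hy c b => /= /orP[]/eqP-> /orP[]/eqP->; rewrite ?black_dblack ?black_dwhite //.
  by rewrite facerel_sym.
have : 0 < #|Del :\ D| by move: N1; rewrite hN (cardsD1 D) dD.
case/card_gt0P => E; rewrite in_setD1 => /andP[ne dE].
by move: (no_return wfG sub hfix hext dD dE ne (Del_orbit dD dE)); rewrite conn.
Qed.

End Main.


Theorem mainTheorem6 (V N : nat) (G : feyngraph V) :
  wf_graph G -> melonic G -> onePI G -> 1 < V -> #|ext_nodes G| = N.*2 ->
  exists (j : 'I_6) (P : {set node V * node V}),
    [/\ forall p, p \in P -> dipole G j p.1 p.2 /\ external G p.1 /\ external G p.2,
        forall x, external G x -> #|[set p in P | (p.1 == x) || (p.2 == x)]| = 1,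
        #|P| = N,
        #|open_faces_j G j| = N &
        (1 < N -> forall x y, face_connects G j x y ->
           forall p q, p \in P -> q \in P ->
             (x == p.1) || (x == p.2) -> (y == q.1) || (y == q.2) -> p != q)].
Proof.
move=> wfG [_ [[G0 [wf0 [vac0 [tree [_ sub]]]]] opt]] pi _ cardN.
exact: (final wfG wf0 vac0 tree sub pi opt cardN).
Qed.
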